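(* If $n$ is a non-negative integer, then $$\sum_{k = 1}^n \sum_{j = \lfloor n/2 \rfloor }^{k - 1} \frac{1}{n - j}\binom{j}{n - j} = F_{n + 1} - 1.$$
   Context: $F_n$ are the Fibonacci numbers ($F_0=0$, $F_1=1$, $F_{n}=F_{n-1}+F_{n-2}$). A sum whose upper limit is smaller than its lower limit is zero. *)

(* Defs.v *)
From mathcomp Require Import all_boot all_algebra.
Set Implicit Arguments. Unset Strict Implicit. Unset Printing Implicit Defensive.

Fixpoint fib (n : nat) : nat :=
  match n with
  | 0 => 0
  | 1 => 1
  | (m.+1 as p).+1 => fib p + fib m
  end.

(* Main.v *)
Require Import Defs.
From mathcomp Require Import all_boot all_algebra zify.
Import GRing.Theory Num.Theory.
Local Open Scope ring_scope.

Lemma binS' (n i : nat) : 'C(n.+1 - i, i.+1) = ('C(n - i, i.+1) + 'C(n - i, i))%N.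
Proof.
case: (leqP i n) => h.
  by rewrite subSn // binS.
have -> : (n.+1 - i = 0)%N by lia.
have -> : (n - i = 0)%N by lia.
by rewrite !bin0n; case: i h.
Qed.

Lemma fibSS n : fib n.+2 = (fib n.+1 + fib n)%N.
Proof. by []. Qed.

Lemma fib_sum_aux (n : nat) :
  (forall N, n < N -> \sum_(i < N) 'C(n - i, i) = fib n.+1)%N /\
  (forall N, n.+1 < N -> \sum_(i < N) 'C(n.+1 - i, i) = fib n.+2)%N.
Proof.
elim: n => [|n [IH1 IH2]].
  split => [[|N]|[|N]] //= hN; rewrite big_ord_recl bin0 big1 //=.
split => // -[|N] // hN.
rewrite big_ord_recl bin0.
under eq_bigr => i _ do rewrite /bump /= subSS binS'.
rewrite big_split /= IH1; last by lia.
rewrite addnA.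
have <- : (\sum_(i < N.+1) 'C(n.+1 - i, i) = 1 + \sum_(i < N) 'C(n - i, i.+1))%N.
  rewrite big_ord_recl bin0; congr (_ + _)%N; apply: eq_bigr => i _; by rewrite /= subSS.
by rewrite IH2 //; lia.
Qed.

Lemma fib_sum (n : nat) : (\sum_(n./2 <= j < n) 'C(j, n - j) + 1 = fib n.+1)%N.
Proof.
rewrite -((fib_sum_aux n).1 n.+1) // -(big_mkord xpredT (fun i => 'C(n - i, i))).
rewrite [in RHS]big_rev_mkord subn0 -(big_mkord xpredT (fun k => 'C(n - (n.+1 - k.+1), n.+1 - k.+1))).
rewrite [in RHS](eq_big_nat _ _ (F2 := fun j => 'C(j, n - j))); last first.
  by move=> i /andP[_ hi]; rewrite subSS subKn // -ltnS.
rewrite [in RHS](big_cat_nat _ (n := n./2)) //=; last by have := odd_double_half n; lia.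
rewrite big_nat_recr /=; last by have := odd_double_half n; lia.
rewrite subnn bin0 [in RHS]big1_seq ?add0n // => j; rewrite mem_index_iota => /andP[_ hj].
apply: bin_small.
have : (j.*2 < n./2.*2)%N by rewrite ltn_double.
have := odd_double_half n. lia.
Qed.

Lemma swap (f : nat -> rat) a m :
  \sum_(1 <= k < m.+1) \sum_(a <= j < k) f j = \sum_(a <= j < m) (m - j)%:R * f j.
Proof.
elim: m => [|m IH]; first by rewrite !big_geq.
rewrite big_nat_recr //= IH.
case: (leqP a m) => ham; last first.
  by rewrite !big_geq ?addr0 // ltnW.
rewrite (big_nat_recr m) //= (big_nat_recr m) //= subSn // subnn mul1r addrA.
congr (_ + _).
rewrite -big_split /=; apply: eq_big_nat => j /andP[_ hj].
by rewrite subSn 1?ltnW // -addn1 natrD mulrDl mul1r.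
Qed.

Theorem proposition13 (n : nat) :
  \sum_(1 <= k < n.+1) \sum_(n./2 <= j < k)
      (('C(j, n - j))%:R / (n - j)%:R : rat)
  = (fib n.+1)%:R - 1.
Proof.
rewrite swap -(fib_sum n) natrD addrK natr_sum.
apply: eq_big_nat => j /andP[_ hj].
rewrite mulrC divfK // pnatr_eq0; lia.
Qed.
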